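(* Let $(C,M)$ be a DGLA pair over $\mathbb{C}$ (with $M$ bounded above and each $H^j(M)$ finite-dimensional), let $(A,m)$ be an Artinian local $\mathbb{C}$-algebra of finite type, and let $\omega\in C^1\otimes_{\mathbb{C}}m$ satisfy $d\omega+\frac12[\omega,\omega]=0$. Then the complex $(M\otimes_{\mathbb{C}}A,\ d_\omega)$, where $d_\omega=d_M\otimes\mathrm{id}_A+\omega$ (with $\omega$ acting via the module multiplication), has finitely generated cohomology over $A$.
   Context: A DGLA over $\mathbb{C}$ is a graded vector space $C=\bigoplus_{i\ge0}C^i$ with a bilinear bracket $C^i\times C^j\to C^{i+j}$ that is graded skew-commutative and satisfies the graded Jacobi identity, and a differential $d$ of degree $1$ with $d^2=0$ satisfying $d[\alpha,\beta]=[d\alpha,\beta]+(-1)^{i}[\alpha,d\beta]$ for $\alpha\in C^i$. A module over $C$ is a graded vector space $M=\bigoplus_{i\ge0}M^i$ with bilinear maps $C^i\times M^j\to M^{i+j}$, $(\alpha,\xi)\mapsto\alpha\xi$, such that $[\alpha,\beta]\xi=\alpha(\beta\xi)-(-1)^{ij}\beta(\alpha\xi)$ for $\alpha\in C^i,\beta\in C^j$, and a differential $d_M$ of degree $1$, $d_M^2=0$, with $d_M(\alpha\xi)=(d\alpha)\xi+(-1)^i\alpha(d_M\xi)$ for $\alpha\in C^i$. A DGLA pair $(C,M)$ is a DGLA together with a module. $C\otimes A$ and $M\otimes A$ carry the $A$-linear extensions of these structures. The condition $d\omega+\frac12[\omega,\omega]=0$ implies $d_\omega^2=0$. *)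

(* Defs.v *)
(* Graded objects are nat-indexed families of K-vector
   spaces; tensor products with a finite-dimensional algebra A are realized
   in coordinates w.r.t. the library basis [vbasis fullv] of A. *)
From HB Require Import structures.
From mathcomp Require Import all_boot all_algebra.
From mathcomp Require Import vector falgebra.
From mathcomp Require Export reals complex.

Set Implicit Arguments.
Unset Strict Implicit.
Unset Printing Implicit Defensive.
Import GRing.Theory.
Local Open Scope ring_scope.

Definition gcast (T : nat -> Type) (m n : nat) (e : m = n) (x : T m) : T n :=
  eq_rect m T x n e.
Arguments gcast T {m n} e x.

Section DGLA.
Variable K : fieldType.

Definition sgn (i j : nat) : K := (-1) ^+ (i * j).

Record dgla := DGLA {
  dg_C : nat -> lmodType K;
  dg_br : forall i j, dg_C i -> dg_C j -> dg_C (i + j);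
  dg_d : forall i, dg_C i -> dg_C i.+1;
  dg_br_linl : forall i j (c : K) (a a' : dg_C i) (b : dg_C j),
    dg_br (c *: a + a') b = c *: dg_br a b + dg_br a' b;
  dg_br_linr : forall i j (c : K) (a : dg_C i) (b b' : dg_C j),
    dg_br a (c *: b + b') = c *: dg_br a b + dg_br a b';
  dg_br_skew : forall i j (a : dg_C i) (b : dg_C j),
    dg_br a b = - (sgn i j *: gcast dg_C (addnC j i) (dg_br b a));
  dg_br_jacobi : forall i j k (a : dg_C i) (b : dg_C j) (c : dg_C k),
    dg_br a (dg_br b c) =
      gcast dg_C (esym (addnA i j k)) (dg_br (dg_br a b) c)
      + sgn i j *: gcast dg_C (addnCA j i k) (dg_br b (dg_br a c));
  dg_d_lin : forall i (c : K) (a a' : dg_C i),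
    dg_d (c *: a + a') = c *: dg_d a + dg_d a';
  dg_dd : forall i (a : dg_C i), dg_d (dg_d a) = 0;
  dg_d_br : forall i j (a : dg_C i) (b : dg_C j),
    dg_d (dg_br a b) =
      gcast dg_C (addSn i j) (dg_br (dg_d a) b)
      + (-1) ^+ i *: gcast dg_C (addnS i j) (dg_br a (dg_d b))
}.

Record dgmod (L : dgla) := DGMod {
  md_M : nat -> lmodType K;
  md_act : forall i j, dg_C L i -> md_M j -> md_M (i + j);
  md_d : forall j, md_M j -> md_M j.+1;
  md_act_linl : forall i j (c : K) (a a' : dg_C L i) (x : md_M j),
    md_act (c *: a + a') x = c *: md_act a x + md_act a' x;
  md_act_linr : forall i j (c : K) (a : dg_C L i) (x x' : md_M j),
    md_act a (c *: x + x') = c *: md_act a x + md_act a x';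
  md_act_br : forall i j k (a : dg_C L i) (b : dg_C L j) (x : md_M k),
    md_act (dg_br a b) x =
      gcast md_M (addnA i j k) (md_act a (md_act b x))
      - sgn i j *: gcast md_M (etrans (addnCA j i k) (addnA i j k))
                     (md_act b (md_act a x));
  md_d_lin : forall j (c : K) (x x' : md_M j),
    md_d (c *: x + x') = c *: md_d x + md_d x';
  md_dd : forall j (x : md_M j), md_d (md_d x) = 0;
  md_d_act : forall i j (a : dg_C L i) (x : md_M j),
    md_d (md_act a x) =
      gcast md_M (addSn i j) (md_act (dg_d a) x)
      + (-1) ^+ i *: gcast md_M (addnS i j) (md_act a (md_d x))
}.

Definition is_cobound (X : nat -> zmodType) (D : forall n, X n -> X n.+1)
  (j : nat) (x : X j) : Prop :=
  match j return X j -> Prop with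
  | 0 => fun x => x = 0
  | j'.+1 => fun x => exists y : X j', D j' y = x
  end x.

Definition cohom_fg (S : Type) (X : nat -> zmodType)
  (D : forall n, X n -> X n.+1) (act : forall n, S -> X n -> X n) (j : nat) :=
  exists (r : nat) (z : 'I_r -> X j),
    (forall k, D j (z k) = 0) /\
    forall x : X j, D j x = 0 ->
      exists c : 'I_r -> S,
        is_cobound D (x - \sum_(k < r) act j (c k) (z k)).

Section Tensor.
Variable A : falgType K.

Definition dimA := \dim (fullv : {vspace A}).
Definition eA : dimA.-tuple A := vbasis (fullv : {vspace A}).

(* V (x)_K A, as families of coordinates along the basis eA of A *)
Definition tens (V : lmodType K) := {ffun 'I_dimA -> V}.

Definition tmul (V : lmodType K) (v : V) (a : A) : tens V :=
  [ffun k => coord eA k a *: v].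

Definition tlin (V W : lmodType K) (f : V -> W) (x : tens V) : tens W :=
  [ffun k => f (x k)].

(* A-bilinear extension of a K-bilinear map: b(v(x)a, w(x)a') = b(v,w)(x)aa' *)
Definition tbil (U V W : lmodType K) (b : U -> V -> W) (x : tens U)
  (y : tens V) : tens W :=
  [ffun k => \sum_(i < dimA) \sum_(l < dimA)
               coord eA k (tnth eA i * tnth eA l) *: b (x i) (y l)].

(* the A-module structure on V (x) A : a.(v (x) a') = v (x) (a a') *)
Definition tact (V : lmodType K) (a : A) (x : tens V) : tens V :=
  [ffun k => \sum_(i < dimA) coord eA k (a * tnth eA i) *: x i].

Definition in_tens_sub (V : lmodType K) (I : pred A) (x : tens V) : Prop :=
  exists (r : nat) (v : 'I_r -> V) (a : 'I_r -> A),
    (forall l, a l \in I) /\ x = \sum_(l < r) tmul (v l) (a l).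

Definition is_ideal (I : pred A) : Prop :=
  [/\ 0 \in I, (forall a b, a \in I -> b \in I -> a + b \in I)
    & (forall a b, b \in I -> a * b \in I)].

Definition maximal_ideal (I : pred A) : Prop :=
  [/\ is_ideal I, 1 \notin I &
     forall J : pred A, is_ideal J -> {subset I <= J} -> 1 \notin J -> J =i I].

Definition local_with_max (m : pred A) : Prop :=
  maximal_ideal m /\ forall J : pred A, maximal_ideal J -> J =i m.

Definition twisted_d (L : dgla) (Mo : dgmod L) (omega : tens (dg_C L 1))
  (j : nat) (x : tens (md_M Mo j)) : tens (md_M Mo j.+1) :=
  tlin (@md_d L Mo j) x
  + gcast (fun n => tens (md_M Mo n)) (add1n j) (tbil (@md_act L Mo 1 j) omega x).

End Tensor.
End DGLA.

(* Main.v *)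
Require Import Defs.
From HB Require Import structures.
From mathcomp Require Import all_boot all_algebra.
From mathcomp Require Import vector falgebra reals complex.
From mathcomp Require Import ring zify.
From Stdlib Require Import Classical.
Import GRing.Theory Num.Theory.
Local Open Scope ring_scope.
Set Implicit Arguments.
Unset Strict Implicit.
Unset Printing Implicit Defensive.


Lemma gcast_id (T : nat -> Type) n (e : n = n) (x : T n) : gcast T e x = x.
Proof. by rewrite (eq_axiomK e). Qed.

Section Tens.
Variables (K : fieldType) (A : falgType K).
Local Notation e := (eA A).

Lemma free_e : free e.
Proof. exact: basis_free (vbasisP fullv). Qed.

Lemma coord_e (i k : 'I_(dimA A)) : coord e k (tnth e i) = (i == k)%:R.
Proof. rewrite (tnth_nth 0); exact: coord_free free_e. Qed.

Lemma decA (a : A) : a = \sum_i coord e i a *: tnth e i.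
Proof. rewrite {1}(coord_vbasis (memvf a)); apply: eq_bigr=> i _; by rewrite (tnth_nth 0). Qed.

Section V.
Variable V : lmodType K.

Lemma tmulE (v : V) (a : A) k : tmul v a k = coord e k a *: v.
Proof. by rewrite ffunE. Qed.

Lemma tmulDl (v v' : V) (a : A) : tmul (v + v') a = tmul v a + tmul v' a.
Proof. by apply/ffunP=> k; rewrite !ffunE scalerDr. Qed.
Lemma tmulZl c (v : V) (a : A) : tmul (c *: v) a = c *: tmul v a.
Proof. by apply/ffunP=> k; rewrite !ffunE !scalerA mulrC. Qed.
Lemma tmul0l (a : A) : tmul (0 : V) a = 0.
Proof. by apply/ffunP=> k; rewrite !ffunE scaler0. Qed.
Lemma tmulNl (v : V) (a : A) : tmul (- v) a = - tmul v a.
Proof. by apply/ffunP=> k; rewrite !ffunE scalerN. Qed.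
Lemma tmulDr (v : V) (a a' : A) : tmul v (a + a') = tmul v a + tmul v a'.
Proof. by apply/ffunP=> k; rewrite !ffunE linearD scalerDl. Qed.
Lemma tmulZr c (v : V) (a : A) : tmul v (c *: a) = c *: tmul v a.
Proof. by apply/ffunP=> k; rewrite !ffunE linearZ scalerA. Qed.
Lemma tmul0r (v : V) : tmul v (0 : A) = 0.
Proof. by apply/ffunP=> k; rewrite !ffunE linear0 scale0r. Qed.

Lemma tmul_suml I r (P : pred I) (F : I -> V) (a : A) :
  tmul (\sum_(i <- r | P i) F i) a = \sum_(i <- r | P i) tmul (F i) a.
Proof. exact: (big_morph (fun v => tmul v a) (fun v v' => tmulDl v v' a) (tmul0l a)). Qed.
Lemma tmul_sumr I r (P : pred I) (F : I -> A) (v : V) :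
  tmul v (\sum_(i <- r | P i) F i) = \sum_(i <- r | P i) tmul v (F i).
Proof. exact: (big_morph (tmul v) (tmulDr v) (tmul0r v)). Qed.

Lemma tdec (x : tens A V) : x = \sum_i tmul (x i) (tnth e i).
Proof.
apply/ffunP=> k; rewrite sum_ffunE (bigD1 k) //= big1 ?addr0.
  by rewrite ffunE coord_e eqxx scale1r.
by move=> i /negPf ik; rewrite ffunE coord_e ik scale0r.
Qed.

Lemma tact_tmul (a a' : A) (v : V) : tact a (tmul v a') = tmul v (a * a').
Proof.
apply/ffunP=> k; rewrite !ffunE.
under eq_bigr => ? _ do rewrite ffunE scalerA.
rewrite -scaler_suml; congr (_ *: v).
rewrite {2}(decA a') mulr_sumr linear_sum; apply: eq_bigr=> i _.
by rewrite -scalerAr linearZ /= mulrC.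
Qed.

Lemma tact_scal c (x : tens A V) : tact (c%:A : A) x = c *: x.
Proof.
apply/ffunP=> k; rewrite !ffunE.
under eq_bigr => ? _ do rewrite mulr_algl linearZ /= coord_e.
rewrite (bigD1 k) //= big1 ?addr0.
  by rewrite eqxx mulr1.
by move=> i /negPf ik; rewrite ik mulr0 scale0r.
Qed.

Variable W : lmodType K.
Section Lin.
Variable f : {linear V -> W}.
Lemma tlin_tmul v (a : A) : tlin f (tmul v a) = tmul (f v) a.
Proof. by apply/ffunP=> k; rewrite !ffunE linearZ. Qed.
Lemma tlinD (x y : tens A V) : tlin f (x + y) = tlin f x + tlin f y.
Proof. by apply/ffunP=> k; rewrite !ffunE linearD. Qed.
Lemma tlin0 : tlin f (0 : tens A V) = 0.
Proof. by apply/ffunP=> k; rewrite !ffunE linear0. Qed.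
Lemma tlinZ c (x : tens A V) : tlin f (c *: x) = c *: tlin f x.
Proof. by apply/ffunP=> k; rewrite !ffunE linearZ. Qed.
Lemma tlin_sum I r (P : pred I) (F : I -> tens A V) :
  tlin f (\sum_(i <- r | P i) F i) = \sum_(i <- r | P i) tlin f (F i).
Proof. exact: (big_morph (tlin f) tlinD tlin0). Qed.
End Lin.

Section Fun.
Variable phi : A -> K.
Hypothesis phiL : forall c a a', phi (c *: a + a') = c * phi a + phi a'.
Lemma phi0 : phi 0 = 0.
Proof. by have := phiL 1 0 0; rewrite scale1r addr0 mul1r => /eqP; rewrite -subr_eq subrr eq_sym => /eqP. Qed.
Lemma phiZ c a : phi (c *: a) = c * phi a.
Proof. by rewrite -[c *: a]addr0 phiL phi0 addr0. Qed.
Lemma phiD (a a' : A) : phi (a + a') = phi a + phi a'.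
Proof. by have := phiL 1 a a'; rewrite scale1r mul1r. Qed.
Lemma phi_sum I r (P : pred I) (F : I -> A) :
  phi (\sum_(i <- r | P i) F i) = \sum_(i <- r | P i) phi (F i).
Proof. exact: (big_morph phi phiD phi0). Qed.

Definition tfun (x : tens A V) : V := \sum_k phi (tnth e k) *: x k.
Lemma tfun_tmul v (a : A) : tfun (tmul v a) = phi a *: v.
Proof.
rewrite /tfun; under eq_bigr => ? _ do rewrite ffunE scalerA.
rewrite -scaler_suml {2}(decA a) phi_sum; congr (_ *: v).
by apply: eq_bigr=> i _; rewrite phiZ mulrC.
Qed.
Lemma tfunD (x y : tens A V) : tfun (x + y) = tfun x + tfun y.
Proof. by rewrite /tfun -big_split; apply: eq_bigr=> i _; rewrite ffunE scalerDr. Qed.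
Lemma tfun0 : tfun (0 : tens A V) = 0.
Proof. by rewrite /tfun big1 // => i _; rewrite ffunE scaler0. Qed.
Lemma tfun_sum I r (P : pred I) (F : I -> tens A V) :
  tfun (\sum_(i <- r | P i) F i) = \sum_(i <- r | P i) tfun (F i).
Proof. exact: (big_morph tfun tfunD tfun0). Qed.
End Fun.
End V.

Section Bil.
Variables (U V W : lmodType K) (b : U -> V -> W).
Hypothesis Hl : forall c u u' v, b (c *: u + u') v = c *: b u v + b u' v.
Hypothesis Hr : forall c u v v', b u (c *: v + v') = c *: b u v + b u v'.

Lemma b0l v : b 0 v = 0.
Proof. by have := Hl 1 0 0 v; rewrite !scale1r addr0 => /(congr1 (fun z => z - b 0 v)); rewrite addrK subrr. Qed.
Lemma b0r u : b u 0 = 0.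
Proof. by have := Hr 1 u 0 0; rewrite !scale1r addr0 => /(congr1 (fun z => z - b u 0)); rewrite addrK subrr. Qed.
Lemma bZl c u v : b (c *: u) v = c *: b u v.
Proof. by rewrite -[c *: u]addr0 Hl b0l addr0. Qed.
Lemma bZr c u v : b u (c *: v) = c *: b u v.
Proof. by rewrite -[c *: v]addr0 Hr b0r addr0. Qed.
Lemma bDl u u' v : b (u + u') v = b u v + b u' v.
Proof. by have := Hl 1 u u' v; rewrite !scale1r. Qed.
Lemma bDr u v v' : b u (v + v') = b u v + b u v'.
Proof. by have := Hr 1 u v v'; rewrite !scale1r. Qed.

Lemma tbil_tmul u (a : A) v (a' : A) : tbil b (tmul u a) (tmul v a') = tmul (b u v) (a * a').
Proof.
apply/ffunP=> k; rewrite !ffunE.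
under eq_bigr do under eq_bigr => ? _ do rewrite !ffunE bZl bZr !scalerA.
under eq_bigr => ? _ do rewrite -scaler_suml.
rewrite -scaler_suml; congr (_ *: _).
rewrite {2}(decA a) {2}(decA a') mulr_suml linear_sum; apply: eq_bigr=> i _.
rewrite mulr_sumr linear_sum; apply: eq_bigr=> l _.
rewrite -scalerAl -scalerAr !linearZ /=; ring.
Qed.

Lemma tbilDl (x x' : tens A U) (y : tens A V) : tbil b (x + x') y = tbil b x y + tbil b x' y.
Proof.
apply/ffunP=> k; rewrite !ffunE -big_split; apply: eq_bigr=> i _.
rewrite -big_split; apply: eq_bigr=> l _; by rewrite ffunE bDl scalerDr.
Qed.
Lemma tbilDr (x : tens A U) (y y' : tens A V) : tbil b x (y + y') = tbil b x y + tbil b x y'.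
Proof.
apply/ffunP=> k; rewrite !ffunE -big_split; apply: eq_bigr=> i _.
rewrite -big_split; apply: eq_bigr=> l _; by rewrite ffunE bDr scalerDr.
Qed.
Lemma tbil0l (y : tens A V) : tbil b (0 : tens A U) y = 0.
Proof. apply/ffunP=> k; rewrite !ffunE big1 // => i _; rewrite big1 // => l _; by rewrite ffunE b0l scaler0. Qed.
Lemma tbil0r (x : tens A U) : tbil b x (0 : tens A V) = 0.
Proof. apply/ffunP=> k; rewrite !ffunE big1 // => i _; rewrite big1 // => l _; by rewrite ffunE b0r scaler0. Qed.
Lemma tbilZl c (x : tens A U) (y : tens A V) : tbil b (c *: x) y = c *: tbil b x y.
Proof.
apply/ffunP=> k; rewrite !ffunE scaler_sumr; apply: eq_bigr=> i _.
rewrite scaler_sumr; apply: eq_bigr=> l _; by rewrite ffunE bZl !scalerA mulrC.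
Qed.
Lemma tbil_suml I r (P : pred I) (F : I -> tens A U) (y : tens A V) :
  tbil b (\sum_(i <- r | P i) F i) y = \sum_(i <- r | P i) tbil b (F i) y.
Proof. exact: (big_morph (fun x => tbil b x y) (fun x x' => tbilDl x x' y) (tbil0l y)). Qed.
Lemma tbil_sumr I r (P : pred I) (F : I -> tens A V) (x : tens A U) :
  tbil b x (\sum_(i <- r | P i) F i) = \sum_(i <- r | P i) tbil b x (F i).
Proof. exact: (big_morph (tbil b x) (tbilDr x) (tbil0r x)). Qed.
End Bil.
End Tens.


Section tDD.
Variables (K : fieldType) (L : dgla K) (Mo : dgmod L) (A : falgType K).
Hypothesis AC : forall a b : A, a * b = b * a.
Hypothesis two : (2%:R : K) != 0.
Variable omega : tens A (dg_C L 1).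
Hypothesis MC : tlin (@dg_d _ L 1) omega + 2%:R^-1 *: tbil (@dg_br _ L 1 1) omega omega = 0.
Local Notation e := (eA A).
Local Notation M := (md_M Mo).

Lemma mdd_lin j : linear (@md_d _ L Mo j).
Proof. by move=> c x y; rewrite md_d_lin. Qed.
HB.instance Definition _ j := GRing.isLinear.Build K (M j) (M j.+1) _ (@md_d _ L Mo j) (@mdd_lin j).
Lemma mact_lin i j a : linear (@md_act _ L Mo i j a).
Proof. by move=> c x y; rewrite md_act_linr. Qed.
HB.instance Definition _ i j a := GRing.isLinear.Build K (M j) (M (i+j)) _ (@md_act _ L Mo i j a) (@mact_lin i j a).
Lemma dgd_lin i : linear (@dg_d _ L i).
Proof. by move=> c x y; rewrite dg_d_lin. Qed.
HB.instance Definition _ i := GRing.isLinear.Build K (dg_C L i) (dg_C L i.+1) _ (@dg_d _ L i) (@dgd_lin i).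

Local Notation D := (twisted_d omega).

Lemma DE j (x : tens A (M j)) : D x = tlin (@md_d _ L Mo j) x + tbil (@md_act _ L Mo 1 j) omega x.
Proof. by rewrite /twisted_d gcast_id. Qed.

Lemma actbil_suml i j I r (P : pred I) (F : I -> tens A (dg_C L i)) (y : tens A (M j)) :
  tbil (@md_act _ L Mo i j) (\sum_(k <- r | P k) F k) y = \sum_(k <- r | P k) tbil (@md_act _ L Mo i j) (F k) y.
Proof. exact: (tbil_suml (@md_act_linl _ L Mo i j)). Qed.
Lemma actbil_tmul i j u (a : A) v (a' : A) :
  tbil (@md_act _ L Mo i j) (tmul u a) (tmul v a') = tmul (md_act u v) (a * a').
Proof. exact: (tbil_tmul (@md_act_linl _ L Mo i j) (@md_act_linr _ L Mo i j)). Qed.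

Lemma D_tmul j (v : M j) (a : A) :
  D (tmul v a) = tmul (md_d v) a + \sum_l tmul (md_act (omega l) v) (tnth e l * a).
Proof.
rewrite DE tlin_tmul; congr (_ + _).
rewrite {1}(tdec omega) actbil_suml; apply: eq_bigr=> l _. by rewrite actbil_tmul.
Qed.

Lemma tDD j (x y : tens A (M j)) : D (x + y) = D x + D y.
Proof.
rewrite !DE tlinD (tbilDr (@md_act_linr _ L Mo 1 j)).
by rewrite -!addrA; congr (_ + _); rewrite addrCA.
Qed.
Lemma tD0 j : D (0 : tens A (M j)) = 0.
Proof. by rewrite DE tlin0 (tbil0r (@md_act_linr _ L Mo 1 j)) addr0. Qed.
Lemma tDZ j c (x : tens A (M j)) : D (c *: x) = c *: D x.
Proof.
rewrite !DE tlinZ scalerDr; congr (_ + _).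
apply/ffunP=> k; rewrite !ffunE scaler_sumr; apply: eq_bigr=> i _.
rewrite scaler_sumr; apply: eq_bigr=> l _.
by rewrite ffunE linearZ /= !scalerA mulrC.
Qed.
Lemma tD_sum j I r (P : pred I) (F : I -> tens A (M j)) :
  D (\sum_(i <- r | P i) F i) = \sum_(i <- r | P i) D (F i).
Proof. exact: (big_morph (@twisted_d _ A L Mo omega j) (@tDD j) (@tD0 j)). Qed.

Lemma DD_tmul j (v : M j) (a : A) : D (D (tmul v a)) = 0.
Proof.
have Psi0 : tbil (@md_act _ L Mo 2 j) (tlin (@dg_d _ L 1) omega
   + 2%:R^-1 *: tbil (@dg_br _ L 1 1) omega omega) (tmul v a) = 0.
  by rewrite MC (tbil0l (@md_act_linl _ L Mo 2 j)).
rewrite -Psi0 (tbilDl (@md_act_linl _ L Mo 2 j)) (tbilZl (@md_act_linl _ L Mo 2 j)).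
have E1 : tlin (@dg_d _ L 1) omega = \sum_l tmul (dg_d (omega l)) (tnth e l).
  by rewrite {1}(tdec omega) tlin_sum; apply: eq_bigr=> l _; rewrite tlin_tmul.
have E2 : tbil (@dg_br _ L 1 1) omega omega =
    \sum_l \sum_l' tmul (dg_br (omega l) (omega l')) (tnth e l * tnth e l').
  rewrite {1}(tdec omega) (tbil_suml (@dg_br_linl _ L 1 1)); apply: eq_bigr=> l _.
  rewrite [X in tbil _ _ X](tdec omega) (tbil_sumr (@dg_br_linr _ L 1 1)); apply: eq_bigr=> l' _.
  exact: (tbil_tmul (@dg_br_linl _ L 1 1) (@dg_br_linr _ L 1 1)).
rewrite E1 E2 !actbil_suml.
under [X in _ = X + _]eq_bigr => l _ do rewrite actbil_tmul.
under [X in _ = _ + _ *: X]eq_bigr => l _.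
  rewrite actbil_suml; under eq_bigr => l' _ do rewrite actbil_tmul (@md_act_br _ L Mo 1 1 j) !gcast_id.
  over.
rewrite D_tmul tDD D_tmul tD_sum md_dd tmul0l add0r.
under [X in _ + X = _]eq_bigr => l _ do rewrite D_tmul (@md_d_act _ L Mo 1 j) !gcast_id expr1 scaleN1r tmulDl tmulNl.
rewrite big_split /= big_split /= sumrN.
set X := \sum_l tmul (md_act (omega l) (md_d v)) _.
set Dw := \sum_l tmul (md_act (dg_d (omega l)) v) _.
set S := \sum_l \sum_l0 _.
have -> : 2%:R^-1 *: \sum_l \sum_l'
        tmul (md_act (omega l) (md_act (omega l') v) -
           sgn K 1 1 *: md_act (omega l') (md_act (omega l) v))
          (tnth e l * tnth e l' * a) = S.

  under eq_bigr => l _ do under eq_bigr => l' _ do rewrite /sgn mul1n expr1 scaleN1r opprK tmulDl.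
  under eq_bigr => l _ do rewrite big_split /=.
  rewrite big_split /= exchange_big /=.
  rewrite [X in _ *: (X + _)](_ : _ = S).
    rewrite [X in _ *: (_ + X)](_ : _ = S).
      by rewrite -mulr2n -scaler_nat scalerA mulVf // scale1r.
    rewrite /S; apply: eq_bigr=> l _; apply: eq_bigr=> i _; by rewrite (AC (tnth e l)) -mulrA.
  rewrite /S; apply: eq_bigr=> l _; apply: eq_bigr=> i _; by rewrite -mulrA.
by rewrite addrA (addrC X) subrK.
Qed.
End tDD.

Section DD2.
Variables (K : fieldType) (L : dgla K) (Mo : dgmod L) (A : falgType K).
Hypothesis AC : forall a b : A, a * b = b * a.
Hypothesis two : (2%:R : K) != 0.
Variable omega : tens A (dg_C L 1).
Hypothesis MC : tlin (@dg_d _ L 1) omega + 2%:R^-1 *: tbil (@dg_br _ L 1 1) omega omega = 0.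
Lemma DDx j (x : tens A (md_M Mo j)) : twisted_d omega (twisted_d omega x) = 0.
Proof.
rewrite (tdec x) !tD_sum big1 // => i _.
exact: DD_tmul.
Qed.
End DD2.


Section LinS.
Variables (K : fieldType) (V : lmodType K).

Fixpoint Lin (zs : seq V) (x : V) : Prop :=
  match zs with [::] => x = 0 | z :: zs' => exists c, Lin zs' (x - c *: z) end.
Fixpoint AllP (P : V -> Prop) (zs : seq V) : Prop :=
  match zs with [::] => True | z :: zs' => P z /\ AllP P zs' end.
Definition subsp (P : V -> Prop) := P 0 /\ forall c x y, P x -> P y -> P (c *: x + y).

Lemma subsp0 P : subsp P -> P 0. Proof. by case. Qed.
Lemma subspD P x y : subsp P -> P x -> P y -> P (x + y).
Proof. by case=> _ H Px Py; have := H 1 x y Px Py; rewrite scale1r. Qed.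
Lemma subspZ P c x : subsp P -> P x -> P (c *: x).
Proof. by case=> H0 H Px; have := H c x 0 Px H0; rewrite addr0. Qed.
Lemma subspN P x : subsp P -> P x -> P (- x).
Proof. by move=> sP Px; rewrite -scaleN1r; apply: subspZ. Qed.
Lemma subspB P x y : subsp P -> P x -> P y -> P (x - y).
Proof. by move=> sP Px Py; apply: subspD=> //; apply: subspN. Qed.

Lemma AllP_mono (P Q : V -> Prop) zs : (forall x, P x -> Q x) -> AllP P zs -> AllP Q zs.
Proof. by move=> H; elim: zs => //= z zs IH [Pz Pzs]; split; [exact: H | exact: IH]. Qed.
Lemma AllP_cat P zs ws : AllP P zs -> AllP P ws -> AllP P (zs ++ ws).
Proof. by elim: zs => //= z zs IH [Pz Pzs] Pws; split; [|exact: IH]. Qed.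

Lemma Lin0 zs : Lin zs 0.
Proof. by elim: zs => //= z zs IH; exists 0; rewrite scale0r subr0. Qed.
Lemma LinD zs x y : Lin zs x -> Lin zs y -> Lin zs (x + y).
Proof.
elim: zs x y => [x y /= -> ->|z zs IH x y [c Hx] [d Hy]]; first by rewrite addr0.
exists (c + d); have := IH _ _ Hx Hy.
by rewrite scalerDl opprD addrACA.
Qed.
Lemma LinZ zs c x : Lin zs x -> Lin zs (c *: x).
Proof.
elim: zs x => [x /= ->|z zs IH x [d Hx]]; first by rewrite scaler0.
by exists (c * d); have := IH _ Hx; rewrite scalerBr scalerA.
Qed.
Lemma Lin_subsp zs : subsp (Lin zs).
Proof. by split; [apply: Lin0 | move=> c x y Hx Hy; apply: LinD=> //; apply: LinZ]. Qed.
Lemma Lin_catl zs ws x : Lin zs x -> Lin (zs ++ ws) x.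
Proof.
elim: zs x => [x /= ->|z zs IH x [c Hx]]; first exact: Lin0.
by exists c; apply: IH.
Qed.
Lemma Lin_catr zs ws x : Lin ws x -> Lin (zs ++ ws) x.
Proof. by elim: zs => //= z zs IH H; exists 0; rewrite scale0r subr0; apply: IH. Qed.
Lemma Lin_sub P zs x : subsp P -> AllP P zs -> Lin zs x -> P x.
Proof.
move=> sP; elim: zs x => [x _ /= ->|z zs IH x [Pz Pzs] [c Hx]]; first exact: subsp0.
have := IH _ Pzs Hx => H; rewrite -(subrK (c *: z) x).
by apply: subspD=> //; apply: subspZ.
Qed.

Lemma L1 zs (T : V -> Prop) : subsp T -> (forall t, T t -> Lin zs t) ->
  exists ts, AllP T ts /\ forall t, T t -> Lin ts t.
Proof.
elim: zs T => [|z zs IH] T sT HT.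
  by exists [::]; split=> // t /HT.
pose T' t := T t /\ Lin zs t.
have sT' : subsp T'.
  split; first by split; [apply: subsp0 | apply: Lin0].
  move=> c x y [Tx Lx] [Ty Ly]; split; first by case: sT => _ H; exact: H.
  by case: (Lin_subsp zs) => _ H; exact: H.
have [ts' [Ats' Hts']] := IH T' sT' (fun t (H : T' t) => proj2 H).
case: (classic (exists t0, T t0 /\ ~ Lin zs t0)) => [[t0 [Tt0 nLt0]]|nex].
  have [c0 Hc0] := HT _ Tt0.
  have c0n0 : c0 != 0.
    by apply/eqP=> c00; apply: nLt0; move: Hc0; rewrite c00 scale0r subr0.
  exists (t0 :: ts'); split.
    by split=> //; apply: AllP_mono Ats' => x [] .
  move=> t Tt; have [c Hc] := HT _ Tt.
  exists (c / c0); apply: Hts'; split.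
    by apply: subspB=> //; apply: subspZ.
  have -> : t - (c / c0) *: t0 = (t - c *: z) - (c / c0) *: (t0 - c0 *: z).
    by rewrite scalerBr scalerA mulfVK // opprB addrA subrK.
  by apply: subspB; [apply: Lin_subsp | | apply: subspZ; [apply: Lin_subsp|]].
exists ts'; split; first by apply: AllP_mono Ats' => x [] .
move=> t Tt; apply: Hts'; split=> //.
by apply: NNPP=> nL; apply: nex; exists t.
Qed.

Lemma Llift (Q : V -> Prop) (R : V -> V -> Prop) ts :
  R 0 0 -> (forall c t x t' x', R t x -> R t' x' -> R (c *: t + t') (c *: x + x')) ->
  (forall t x, R t x -> Q x) ->
  AllP (fun t => exists x, R t x) ts ->
  exists xs, AllP Q xs /\ forall t, Lin ts t -> exists x, Lin xs x /\ R t x.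
Proof.
move=> R0 RL RQ; elim: ts => [_|t0 ts IH [[x0 Rx0] /IH [xs [Qxs Hxs]]]].
  by exists [::]; split=> // t /= ->; exists 0.
exists (x0 :: xs); split; first by split=> //; apply: RQ Rx0.
move=> t [c Hc]; have [x' [Lx' Rx']] := Hxs _ Hc.
exists (c *: x0 + x'); split; first by exists c; rewrite addrAC subrr add0r.
by have := RL c _ _ _ _ Rx0 Rx'; rewrite addrC subrK.
Qed.
End LinS.

Lemma alg1 (V : zmodType) (t y f y1 f1 : V) : (t + y + f) - (t + y1 + f1) - (y - y1) = f - f1.
Proof.
rewrite !opprD !opprK !addrA.
rewrite [t + y + f - t]addrAC [t + y - t]addrAC subrr add0r.
rewrite [y + f - y1 - f1 - y]addrAC [y + f - y1 - y]addrAC [y + f - y]addrAC subrr add0r.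
by rewrite addrAC subrK.
Qed.
Lemma alg2 (V : zmodType) (x x1 u d t2 y2 : V) : u = x - x1 - d -> u = t2 + y2 -> x = x1 + t2 + (y2 + d).
Proof.
move=> -> E; rewrite addrA -(addrA x1) -E -addrA subrK.
by rewrite addrC subrK.
Qed.

Lemma add3_lin (K : fieldType) (V : lmodType K) c (a b d a' b' d' : V) :
  c *: (a + b + d) + (a' + b' + d') = (c *: a + a') + (c *: b + b') + (c *: d + d').
Proof. by rewrite !scalerDr addrACA; congr (_ + _); rewrite addrACA. Qed.

Section Filt.
Variables (K : fieldType) (X : nat -> lmodType K) (D : forall n, X n -> X n.+1).
Hypothesis DD_ : forall n (x : X n), D (D x) = 0.
Hypothesis Dlin : forall n c (x y : X n), D (c *: x + y) = c *: D x + D y.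
Variable F : nat -> forall n, X n -> Prop.
Arguments F : clear implicits.
Hypothesis Fs : forall p n, subsp (F p n).
Hypothesis Fdec : forall p n x, F p.+1 n x -> F p n x.
Hypothesis FD : forall p n x, F p n x -> F p n.+1 (D x).
Variable P : nat.
Hypothesis FP : forall n x, F P n x -> x = 0.

Definition Bd p j : X j -> Prop :=
  match j return X j -> Prop with
  | 0 => fun y => y = 0
  | j'.+1 => fun y => exists w, F p j' w /\ D w = y
  end.
Arguments Bd : clear implicits.

Hypothesis Fgr : forall p j, (p < P)%N -> exists zs : seq (X j),
  forall x, F p j x -> F p.+1 j.+1 (D x) ->
  exists t y f, Lin zs t /\ Bd p j y /\ F p.+1 j f /\ x = t + y + f.

Lemma D0 n : D (0 : X n) = 0.
Proof. by have := Dlin 1 (0 : X n) 0; rewrite !scale1r addr0 => /(congr1 (fun z => z - D (0 : X n))); rewrite addrK subrr. Qed.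
Lemma DD n (x y : X n) : D (x + y) = D x + D y.
Proof. by have := Dlin 1 x y; rewrite !scale1r. Qed.
Lemma DZ n c (x : X n) : D (c *: x) = c *: D x.
Proof. by have := Dlin c x 0; rewrite !addr0 D0 addr0. Qed.
Lemma DB n (x y : X n) : D (x - y) = D x - D y.
Proof. by rewrite DD -scaleN1r DZ scaleN1r. Qed.

Lemma Bd_subsp p j : subsp (Bd p j).
Proof.
case: j => [|j] /=.
  by split=> // c x y -> ->; rewrite scaler0 addr0.
split; first by exists 0; split; [apply: subsp0 | apply: D0].
move=> c x y [w [Fw <-]] [w' [Fw' <-]]; exists (c *: w + w'); split; last exact: Dlin.
by case: (Fs p j) => _ H; exact: H.
Qed.
Lemma Bd_dec p j y : Bd p.+1 j y -> Bd p j y.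
Proof. by case: j y => [|j] y //= [w [Fw <-]]; exists w; split=> //; apply: Fdec. Qed.
Lemma Bd_D p j y : Bd p j y -> D y = 0.
Proof. by case: j y => [|j] y /= => [->|[w [_ <-]]]; [apply: D0 | apply: DD_]. Qed.
Lemma Bd_F p j y : Bd p j y -> F p j y.
Proof. by case: j y => [|j] y /= => [->|[w [Fw <-]]]; [apply: subsp0 | apply: FD]. Qed.

Definition G p := forall j, exists xs, AllP (fun z => F p j z /\ D z = 0) xs /\
  forall x, F p j x -> D x = 0 -> exists t y, Lin xs t /\ Bd p j y /\ x = t + y.

Lemma GP : G P.
Proof.
move=> j; exists [::]; split=> // x /FP -> _; exists 0, 0; split=> //; split; last by rewrite addr0.
exact: subsp0 (Bd_subsp P j).
Qed.

Lemma Gstep p : (p < P)%N -> G p.+1 -> G p.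
Proof.
move=> ltpP Gp1 j; have [zs Hzs] := Fgr j ltpP.
pose R t x := (F p j x /\ D x = 0) /\ exists y f, Bd p j y /\ F p.+1 j f /\ x = t + y + f.
have R0 : R 0 0.
  split; first by split; [apply: subsp0 | apply: D0].
  exists 0, 0; split; first exact: subsp0 (Bd_subsp p j).
  by split; [apply: subsp0 | rewrite !addr0].
have RL : forall c t x t' x', R t x -> R t' x' -> R (c *: t + t') (c *: x + x').
  move=> c t x t' x' [[Fx Dx] [y [f [By [Ff ex]]]]] [[Fx' Dx'] [y' [f' [By' [Ff' ex']]]]].
  split.
    split; first by case: (Fs p j) => _ H; apply: H.
    by rewrite Dlin Dx Dx' scaler0 addr0.
  exists (c *: y + y'), (c *: f + f'); split.
    by case: (Bd_subsp p j) => _ H; apply: H.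
  split; first by case: (Fs p.+1 j) => _ H; apply: H.
  by rewrite ex ex' add3_lin.
pose T t := Lin zs t /\ exists x, R t x.
have Tsub : subsp T.
  split; first by split; [apply: Lin0 | exists 0].
  move=> c t t' [Lt [x Rx]] [Lt' [x' Rx']]; split.
    by case: (Lin_subsp zs) => _ H; apply: H.
  by exists (c *: x + x'); apply: RL.
have [ts [Ats Hts]] := L1 Tsub (fun t (H : T t) => proj1 H).
have [xs1 [Axs1 Hxs1]] := Llift (Q := fun z => F p j z /\ D z = 0) R0 RL
   (fun t x (H : R t x) => proj1 H) (AllP_mono (fun t (H : T t) => proj2 H) Ats).
have [xs2 [Axs2 Hxs2]] := Gp1 j.
exists (xs1 ++ xs2); split.
  apply: AllP_cat => //; apply: AllP_mono Axs2 => z [Fz Dz]; split=> //; exact: Fdec.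
move=> x Fx Dx.
have FDx : F p.+1 j.+1 (D x) by rewrite Dx; exact: subsp0.
have [t [y [f [Lt [By [Ff ex]]]]]] := Hzs x Fx FDx.
have Tt : T t by split=> //; exists x; split=> //; exists y, f.
have [x1 [Lx1 [[Fx1 Dx1] [y1 [f1 [By1 [Ff1 ex1]]]]]]] := Hxs1 t (Hts t Tt).
pose u := x - x1 - (y - y1).
have uE : u = f - f1 by rewrite /u ex ex1 alg1.
have Fu : F p.+1 j u by rewrite uE; apply: subspB.
have Du : D u = 0 by rewrite /u !DB Dx Dx1 (Bd_D By) (Bd_D By1) !subrr.
have [t2 [y2 [Lt2 [By2 eu]]]] := Hxs2 u Fu Du.
exists (x1 + t2), (y2 + (y - y1)); split.
  by apply: LinD; [apply: Lin_catl | apply: Lin_catr].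
split; last exact: (alg2 (erefl u) eu).
apply: subspD; first exact: Bd_subsp.
  exact: Bd_dec.
by apply: subspB => //; exact: Bd_subsp.
Qed.

Lemma G0 : G 0.
Proof.
suff H : forall k, (k <= P)%N -> G (P - k) by have := H P (leqnn P); rewrite subnn.
elim=> [_|k IH hk]; first by rewrite subn0; exact: GP.
have e : (P - k = (P - k.+1).+1)%N by rewrite subnS prednK // subn_gt0.
apply: Gstep; first by rewrite ltn_subrL /= (leq_trans _ hk).
rewrite -e; apply: IH; exact: ltnW.
Qed.
End Filt.


Section Alg.
Variables (K : fieldType) (A : falgType K).
Hypothesis AC : forall a b : A, a * b = b * a.
Local Notation e := (eA A).
Local Notation d := (dimA A).

Lemma AllP_mem (V : lmodType K) (P : V -> Prop) zs z : AllP P zs -> z \in zs -> P z.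
Proof.
elim: zs => //= y zs IH [Py Pzs]; rewrite inE => /orP [/eqP -> //|]; exact: IH.
Qed.
Lemma AllP_of_mem (V : lmodType K) (P : V -> Prop) zs : (forall z, z \in zs -> P z) -> AllP P zs.
Proof.
elim: zs => //= y zs IH H; split; first by apply: H; rewrite inE eqxx.
by apply: IH => z zz; apply: H; rewrite inE zz orbT.
Qed.

Lemma span_ind (Q : A -> Prop) (s : seq A) x :
  subsp Q -> (forall g, g \in s -> Q g) -> x \in <<s>>%VS -> Q x.
Proof.
move=> sQ Hs xs; rewrite (coord_span (X := in_tuple s) xs); apply: (big_ind Q); first exact: subsp0.
  by move=> u v Qu Qv; apply: subspD.
by move=> i _; apply: subspZ => //; apply: Hs; apply: mem_nth.
Qed.

Lemma Lin_sum (V : lmodType K) (zs : seq V) I r (P : pred I) (F : I -> V) :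
  (forall i, P i -> Lin zs (F i)) -> Lin zs (\sum_(i <- r | P i) F i).
Proof.
move=> H; apply: (big_ind (Lin zs)); first exact: Lin0.
  by move=> u v; apply: LinD.
exact: H.
Qed.
Lemma Lin_mem (V : lmodType K) (zs : seq V) z : z \in zs -> Lin zs z.
Proof.
elim: zs => //= y zs IH; rewrite inE => /orP [/eqP ->|zz].
  by exists 1; rewrite scale1r subrr; exact: Lin0.
by exists 0; rewrite scale0r subr0; apply: IH.
Qed.

Lemma Lin_e (a : A) : Lin (tval e) a.
Proof.
rewrite (decA a); apply: Lin_sum => i _; apply: LinZ; apply: Lin_mem.
exact: mem_tnth.
Qed.

Lemma vsp_of (J : A -> Prop) : subsp J -> exists U : {vspace A}, forall x, x \in U <-> J x.
Proof.
move=> sJ; have [ts [Ats Hts]] := L1 sJ (fun t _ => Lin_e t).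
exists <<ts>>%VS => x; split.
  by apply: span_ind => // g; apply: AllP_mem.
move=> /Hts; apply: (Lin_sub (P := fun x => x \in <<ts>>%VS)).
  split; first exact: mem0v.
  by move=> c u v Hu Hv; rewrite memvD // memvZ.
by apply: AllP_of_mem => z zt; apply: memv_span.
Qed.

Variable m : pred A.
Hypothesis Hm : local_with_max m.

Definition goodU (b : A) (U : {vspace A}) :=
  [/\ forall a x, x \in U -> a * x \in U, 1 \notin U & b \in U].

Lemma max_good b k (U : {vspace A}) : goodU b U -> (dimA A - \dim U <= k)%N ->
  exists U', [/\ goodU b U', (U <= U')%VS &
     forall U'', goodU b U'' -> (U' <= U'')%VS -> U'' = U'].
Proof.
elim: k U => [|k IH] U gU hk.
  exists U; split=> // U'' gU'' sU; apply/eqP; rewrite eq_sym eqEdim sU /=.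
  have h2 : (\dim U'' <= dimA A)%N by rewrite /dimA dimvS // subvf.
  lia.
case: (classic (exists U1, [/\ goodU b U1, (U <= U1)%VS & U1 != U])).
  move=> [U1 [gU1 sU1 nU1]].
  have hd : (\dim U < \dim U1)%N.
    rewrite ltnNge; apply/negP => h; apply/negP: nU1; rewrite negbK eqEdim.
    have -> : (U1 <= U)%VS.
      by have := eqEdim U U1; rewrite sU1 h /= => /eqP <-.
    by rewrite dimvS.
  have hk1 : (dimA A - \dim U1 <= k)%N.
    have : (\dim U1 <= dimA A)%N by rewrite /dimA dimvS // subvf.
    lia.
  have [U' [gU' sU' mU']] := IH U1 gU1 hk1.
  by exists U'; split => //; apply: subv_trans sU'.
move=> nex; exists U; split=> // U'' gU'' sU; apply/eqP; apply: contraT => nU.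
by exfalso; apply: nex; exists U''.
Qed.

Lemma nonunit_in_m b : ~ (exists c, b * c = 1) -> b \in m.
Proof.
move=> nu.
have sJ0 : subsp (fun x => exists c, x = b * c).
  split; first by exists 0; rewrite mulr0.
  by move=> c x y [u ->] [v ->]; exists (c *: u + v); rewrite mulrDr scalerAr.
have [U0 HU0] := vsp_of sJ0.
have gU0 : goodU b U0.
  split.
  - move=> a x /HU0 [c ->]; apply/HU0; exists (a * c); by rewrite mulrA (AC a b) -mulrA.
  - by apply/negP => /HU0 [c e1]; apply: nu; exists c.
  - by apply/HU0; exists 1; rewrite mulr1.
have [U [[Uid U1 Ub] _ Umax]] := max_good (k := dimA A) gU0 (leq_subr _ _).
have mU : maximal_ideal (fun x => x \in U).
  split.
  - split; [exact: mem0v | by move=> x y; apply: memvD | by move=> x y; apply: Uid].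
  - exact: U1.
  move=> J [J0 JD JM] sUJ J1.
  have sJ : subsp (fun x => x \in J).
    split=> // c x y Jx Jy; apply: JD => //.
    by rewrite -mulr_algl; apply: JM.
  have [U' HU'] := vsp_of sJ.
  have gU' : goodU b U'.
    split.
    - by move=> a x /HU' Jx; apply/HU'; apply: JM.
    - by apply/negP => /HU' /= J1'; move/negP: J1; apply.
    - by apply/HU'; apply: sUJ.
  have sUU' : (U <= U')%VS by apply/subvP => x /sUJ Jx; apply/HU'.
  have eU := Umax _ gU' sUU'.
  by move=> x; apply/idP/idP => [/(HU' x) | Ux]; [rewrite eU | apply: sUJ].
case: Hm => _ /(_ _ mU) Hm'.
by rewrite -Hm'.
Qed.

Lemma notin_m_unit b : b \notin m -> exists c, b * c = 1.
Proof. by move=> bm; apply: NNPP => nu; move/negP: bm; apply; apply: nonunit_in_m. Qed.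

Lemma pigeon (f : nat -> nat) : exists n, (f n <= f n.+1)%N.
Proof.
apply: NNPP => nex.
have hlt : forall n, (f n.+1 < f n)%N.
  by move=> n; rewrite ltnNge; apply/negP => h; apply: nex; exists n.
have hi : forall n, (f n + n <= f 0)%N.
  clear nex.
  elim=> [|k IH]; first by rewrite addn0.
  by have := hlt k; lia.
by clear nex; have := hi (f 0).+1; move: (f (f 0).+1) => y; move: (f 0) => z; lia.
Qed.

Lemma nilp a : a \in m -> exists n, a ^+ n = 0.
Proof.
move=> am; case: (Hm) => [[[m0 mD mM] m1 _] _].
pose V n := <<[seq (a ^+ n * tnth e k)%R | k <- enum 'I_d]>>%VS.
have mulV : forall n c, a ^+ n * c \in V n.
  move=> n c; rewrite (decA c) mulr_sumr; apply: memv_suml => k _.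
  rewrite -scalerAr memvZ // memv_span //.
  exact: (map_f (fun k => a ^+ n * tnth e k) (mem_enum _ k)).
have VS : forall n, (V n.+1 <= V n)%VS.
  move=> n; apply/span_subvP => x /mapP [k _ ->].
  by rewrite exprS (AC a) -mulrA mulV.
have [n hn] : exists n, (\dim (V n) <= \dim (V n.+1))%N.
  exact: (pigeon (fun n => \dim (V n))).
have eV : V n.+1 = V n by apply/eqP; rewrite eqEdim VS.
have : a ^+ n \in V n.+1 by rewrite eV -[a ^+ n]mulr1 mulV.
move=> /(span_ind (Q := fun x => exists c, x = a ^+ n.+1 * c)) [].
- split; first by exists 0; rewrite mulr0.
  by move=> c x y [u ->] [v ->]; exists (c *: u + v); rewrite mulrDr scalerAr.
- by move=> g /mapP [k _ ->]; exists (tnth e k).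
move=> c hc; exists n.
have n1m : (1 - a * c) \notin m.
  apply/negP => h; move/negP: m1; apply.
  rewrite -(subrK (a * c) 1); apply: mD => //; rewrite AC; exact: mM.
have [u hu] := notin_m_unit n1m.
rewrite -[a ^+ n]mulr1 -hu mulrA mulrBr mulr1 mulrA -exprSr -hc subrr mul0r //.
Qed.

Lemma exp_mono (x : A) n n' : x ^+ n = 0 -> (n <= n')%N -> x ^+ n' = 0.
Proof. by move=> h hn; rewrite -(subnKC hn) exprD h mul0r. Qed.

Variables (r : nat) (a : 'I_r -> A).
Hypothesis am : forall l, a l \in m.

Lemma common_q : exists q, forall l, a l ^+ q = 0.
Proof.
suff H : forall s : seq 'I_r, exists q, forall l, l \in s -> a l ^+ q = 0.
  by have [q hq] := H (enum 'I_r); exists q => l; apply: hq; rewrite mem_enum.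
elim=> [|l s [q hq]]; first by exists 0.
have [n hn] := nilp (am l).
exists (maxn n q) => l'; rewrite inE => /orP [/eqP ->|ls].
  by apply: exp_mono hn _; rewrite leq_maxl.
by apply: exp_mono (hq _ ls) _; rewrite leq_maxr.
Qed.

Definition mono (t : seq 'I_r) : A := \prod_(i <- t) a i.
Definition gens p := [seq (mono (tval t) * tnth e k)%R | t <- enum {: p.-tuple 'I_r}, k <- enum 'I_d].
Definition Iv p := <<gens p>>%VS.

Lemma gens_mem p (t : p.-tuple 'I_r) k : mono t * tnth e k \in Iv p.
Proof.
apply: memv_span; apply: (allpairs_f (fun (t : p.-tuple 'I_r) k => mono t * tnth e k)); by rewrite mem_enum.
Qed.

Lemma F1 p (t : p.-tuple 'I_r) c : mono t * c \in Iv p.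
Proof.
rewrite (decA c) mulr_sumr; apply: memv_suml => k _.
by rewrite -scalerAr memvZ // gens_mem.
Qed.

Lemma gens_ind p (Q : A -> Prop) x : subsp Q ->
  (forall (t : p.-tuple 'I_r) k, Q (mono t * tnth e k)) -> x \in Iv p -> Q x.
Proof.
move=> sQ H; apply: span_ind => // g /allpairsP [[t k] [_ _ ->]]; exact: H.
Qed.

Lemma subsp_vs (U : {vspace A}) : subsp (fun x => x \in U).
Proof. by split; [exact: mem0v | move=> c x y hx hy; rewrite memvD // memvZ]. Qed.

Lemma F3 p : (Iv p.+1 <= Iv p)%VS.
Proof.
apply/subvP => x; apply: (gens_ind (Q := fun x => x \in Iv p)); first exact: subsp_vs.
move=> t k; case: t => [[|i t'] //= ht].
have ht' : size t' == p by [].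
rewrite /mono big_cons (AC (a i)) -mulrA.
exact: (F1 (Tuple ht')).
Qed.

Lemma F4 p l x : x \in Iv p -> a l * x \in Iv p.+1.
Proof.
apply: (gens_ind (Q := fun x => a l * x \in Iv p.+1)).
  split; first by rewrite mulr0 mem0v.
  by move=> c u v hu hv; rewrite mulrDr -scalerAr memvD // memvZ.
move=> t k; rewrite mulrA.
have -> : a l * mono t = mono [tuple of l :: t] by rewrite /mono /= big_cons.
exact: gens_mem.
Qed.

Lemma F5 x : x \in Iv 0.
Proof.
rewrite (decA x); apply: memv_suml => k _; rewrite memvZ //.
have := gens_mem [tuple] k; by rewrite /mono big_nil mul1r.
Qed.

Lemma mono_count l (t : seq 'I_r) :
  mono t = a l ^+ count_mem l t * mono [seq x <- t | x != l].
Proof.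
elim: t => [|i t IH]; first by rewrite /mono /= big_nil expr0 mul1r.
rewrite /mono /= big_cons -/(mono t) IH /=.
case: (eqVneq i l) => [->|nil] /=.
  by rewrite add1n exprS -mulrA.
by rewrite big_cons -/(mono _) mulrA (AC (a i)) -mulrA.
Qed.

Lemma size_count (t : seq 'I_r) : size t = (\sum_(l < r) count_mem l t)%N.
Proof.
elim: t => [|i t IH]; first by rewrite big1.
rewrite /= big_split /= -IH (bigD1 i) //= eqxx big1 ?add1n ?addn0 // => l /negPf.
by rewrite eq_sym => ->.
Qed.

Lemma F6 : exists P, forall x, x \in Iv P -> x = 0.
Proof.
have [q hq] := common_q.
exists (r * q).+1 => x; apply: (gens_ind (Q := fun x => x = 0)).
  by split=> // c u v -> ->; rewrite scaler0 addr0.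
move=> t k.
have [l hl] : exists l, (q <= count_mem l t)%N.
  apply: NNPP => nex.
  have hc : forall l, (count_mem l t <= q.-1)%N.
    move=> l; case: (leqP (count_mem l t) q.-1) => // h; exfalso; apply: nex.
    by exists l; apply: leq_trans (leqSpred q) h.
  have := size_count t; rewrite size_tuple => hs.
  have : (\sum_(l < r) count_mem l t <= \sum_(l < r) q.-1)%N by apply: leq_sum.
  rewrite -hs sum_nat_const card_ord.
  have : (r * q.-1 <= r * q)%N by rewrite leq_mul2l leq_pred orbT.
  move: (r * q.-1)%N (r * q)%N => u v; lia.
rewrite (mono_count l) -(subnKC hl) exprD hq !mul0r.
done.
Qed.
End Alg.


Lemma alg3 (V : zmodType) (x S t d : V) : (x - S) - (d - (S - t)) = x - t - d.
Proof. by rewrite opprB !addrA subrK. Qed.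
Lemma alg4 (V : zmodType) (x t d : V) : x = t + d + (x - t - d).
Proof. by rewrite addrC (addrC t) addrA subrK subrK. Qed.

Section Main.
Variables (K : fieldType) (L : dgla K) (Mo : dgmod L) (A : falgType K).
Hypothesis AC : forall a b : A, a * b = b * a.
Variable omega : tens A (dg_C L 1).
Variables (r : nat) (w : 'I_r -> dg_C L 1) (a : 'I_r -> A).
Hypothesis om : omega = \sum_l tmul (w l) (a l).
Local Notation M := (md_M Mo).
Local Notation D := (twisted_d omega).

Local Notation Xf n := (tens A (M n)).

Lemma D_tmul' j (v : M j) (b : A) :
  D (tmul v b) = tmul (md_d v) b + \sum_l tmul (md_act (w l) v) (a l * b).
Proof.
rewrite DE tlin_tmul; congr (_ + _).
rewrite om actbil_suml; apply: eq_bigr=> l _; by rewrite actbil_tmul.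
Qed.

Definition Fp p n (x : Xf n) : Prop :=
  exists s : seq (M n * A), all (fun vb => vb.2 \in Iv a p) s /\
    x = \sum_(vb <- s) tmul vb.1 vb.2.
Arguments Fp : clear implicits.

Lemma Fs p n : subsp (Fp p n).
Proof.
split; first by exists [::]; rewrite big_nil.
move=> c x y [s [hs ->]] [s' [hs' ->]].
exists ([seq (c *: vb.1, vb.2) | vb <- s] ++ s'); split.
  by rewrite all_cat hs' andbT all_map.
rewrite big_cat big_map /= scaler_sumr; congr (_ + _).
by apply: eq_bigr => vb _; rewrite tmulZl.
Qed.

Lemma F_tmul p n (v : M n) b : b \in Iv a p -> Fp p n (tmul v b).
Proof. by move=> hb; exists [:: (v, b)]; rewrite /= hb big_seq1. Qed.

Lemma F_sum p n I s (P : pred I) (G : I -> Xf n) :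
  (forall i, P i -> Fp p n (G i)) -> Fp p n (\sum_(i <- s | P i) G i).
Proof.
move=> H; apply: (big_ind (Fp p n)); first exact: subsp0 (Fs p n).
  by move=> x y; apply: subspD (Fs p n).
exact: H.
Qed.

Lemma Fdec p n x : Fp p.+1 n x -> Fp p n x.
Proof.
move=> [s [hs ->]]; exists s; split=> //; apply: sub_all hs => vb /=.
exact: (subvP (F3 AC a p)).
Qed.

Lemma Fomega p n (x : Xf n) : Fp p n x -> Fp p.+1 n.+1 (D x - tlin (@md_d _ L Mo n) x).
Proof.
move=> [s [hs ->]]; rewrite tD_sum tlin_sum -sumrB big_seq; apply: F_sum => vb vbs.
rewrite D_tmul' tlin_tmul addrC addKr; apply: F_sum => l _; apply: F_tmul.
by apply: F4; move/allP: hs => /(_ _ vbs).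
Qed.

Lemma FD p n x : Fp p n x -> Fp p n.+1 (D x).
Proof.
move=> hx; rewrite -(subrK (tlin (@md_d _ L Mo n) x) (D x)).
apply: subspD (Fs p n.+1) _ _; first exact: Fdec (Fomega hx).
case: hx => s [hs ->]; rewrite tlin_sum big_seq; apply: F_sum => vb vbs.
rewrite tlin_tmul; apply: F_tmul; by move/allP: hs => /(_ _ vbs).
Qed.

Lemma tmulBr n (v : M n) (b b' : A) : tmul v b - tmul v b' = tmul v (b - b').
Proof. by rewrite tmulDr -!scaleN1r tmulZr. Qed.

Lemma tfun_tlin (V1 W1 : lmodType K) (f : {linear V1 -> W1}) (phi : A -> K) (x : tens A V1) :
  tfun phi (tlin f x) = f (tfun phi x).
Proof. by rewrite /tfun linear_sum; apply: eq_bigr => k _; rewrite ffunE linearZ. Qed.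

Section Gr.
Variable p : nat.
Local Notation U := (Iv a p).
Local Notation V := (Iv a p.+1).
Local Notation W := (U :\: V)%VS.
Local Notation s2 := (vbasis W).
Local Notation pi := (addv_pi1 U V).
Definition phi (h : 'I_(\dim W)) (b : A) : K := coord s2 h (pi b).

Lemma phiL h c b b' : phi h (c *: b + b') = c * phi h b + phi h b'.
Proof. by rewrite /phi !linearP. Qed.

Lemma piV b : b \in V -> pi b = 0.
Proof.
move=> bV; have hUV : b \in (U + V)%VS by rewrite -[b]add0r memv_add ?mem0v.
have := addv_pi1_pi2 hUV; rewrite addv_pi2_id // => h.
by apply: (addIr b); rewrite add0r.
Qed.

Lemma phiV h b : b \in V -> phi h b = 0.
Proof. by move=> bV; rewrite /phi piV // linear0. Qed.

Lemma s2W (h : 'I_(\dim W)) : s2`_h \in W.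
Proof. by apply: vbasis_mem; apply: mem_nth; rewrite size_tuple. Qed.

Lemma s2U (h : 'I_(\dim W)) : s2`_h \in U.
Proof. exact: (subvP (diffvSl U V)) (s2W h). Qed.

Lemma decU b : b \in U -> b - \sum_h phi h b *: s2`_h \in V.
Proof.
move=> bU; have hUV : b \in (U + V)%VS by rewrite -[b]addr0 memv_add ?mem0v.
have -> : \sum_h phi h b *: s2`_h = pi b by rewrite {1}(coord_vbasis (memv_pi _ _ b)).
have := addv_pi1_pi2 hUV => h; rewrite -{1}h addrC addKr; exact: memv_pi2.
Qed.

Lemma Fdecomp n (x : Xf n) : Fp p n x -> Fp p.+1 n (x - \sum_h tmul (tfun (phi h) x) s2`_h).
Proof.
move=> [s [hs ->]].
have E : \sum_h tmul (tfun (phi h) (\sum_(vb <- s) tmul vb.1 vb.2)) s2`_h =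
         \sum_(vb <- s) tmul vb.1 (\sum_h phi h vb.2 *: s2`_h).
  under eq_bigr => h _ do rewrite (tfun_sum (phi h)) tmul_suml.
  rewrite exchange_big /=; apply: eq_bigr => vb _; rewrite tmul_sumr; apply: eq_bigr => h _.
  by rewrite (tfun_tmul (@phiL h)) tmulZl tmulZr.
rewrite E -sumrB big_seq; apply: F_sum => vb vbs; rewrite tmulBr; apply: F_tmul.
by apply: decU; move/allP: hs => /(_ _ vbs).
Qed.

Lemma Fkill n (y : Xf n) h : Fp p.+1 n y -> tfun (phi h) y = 0.
Proof.
move=> [s [hs ->]]; rewrite (tfun_sum (phi h)) big_seq big1 // => vb vbs.
by rewrite (tfun_tmul (@phiL h)) phiV ?scale0r //; move/allP: hs => /(_ _ vbs).
Qed.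

Lemma cocyc n (x : Xf n) h : Fp p n x -> Fp p.+1 n.+1 (D x) -> md_d (tfun (phi h) x) = 0.
Proof.
move=> hx hD; have h1 := Fkill h hD; have h2 := Fkill h (Fomega hx).
have : tfun (phi h) (D x) = tfun (phi h) (tlin (@md_d _ L Mo n) x) +
    tfun (phi h) (D x - tlin (@md_d _ L Mo n) x) by rewrite -tfunD addrC subrK.
by rewrite h1 h2 addr0 tfun_tlin.
Qed.

Definition zsf j rM (z : 'I_rM -> M j) : seq (Xf j) :=
  [seq tmul (z k) s2`_h | h : 'I_(\dim W) <- enum 'I_(\dim W), k : 'I_rM <- enum 'I_rM].

Lemma Lin_t j rM (z : 'I_rM -> M j) (c : 'I_(\dim W) -> 'I_rM -> K) :
  Lin (zsf z) (\sum_h tmul (\sum_k c h k *: z k) s2`_h).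
Proof.
apply: Lin_sum => h _; rewrite tmul_suml; apply: Lin_sum => k _; rewrite tmulZl.
apply: LinZ; apply: Lin_mem.
by apply: (allpairs_f (fun (h : 'I_(\dim W)) (k : 'I_rM) => tmul (z k) s2`_h)); rewrite mem_enum.
Qed.

Lemma Fgr_common j (x : Xf j) rM (z : 'I_rM -> M j) :
  Fp p j x -> Fp p.+1 j.+1 (D x) ->
  (forall y : M j, md_d y = 0 -> exists c : 'I_rM -> K,
      is_cobound (@md_d _ L Mo) (y - \sum_(k < rM) c k *: z k)) ->
  exists c : 'I_(\dim W) -> 'I_rM -> K,
    (forall h, is_cobound (@md_d _ L Mo) (tfun (phi h) x - \sum_k c h k *: z k)) /\
    Fp p.+1 j (x - \sum_h tmul (tfun (phi h) x) s2`_h).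
Proof.
move=> hx hD Hz.
have [c hc] := fin_all_exists (fun h => Hz _ (cocyc h hx hD)).
by exists c; split=> //; apply: Fdecomp.
Qed.

Lemma key j (x : Xf j) rM (z : 'I_rM -> M j) (c : 'I_(\dim W) -> 'I_rM -> K) :
  \sum_h tmul (tfun (phi h) x) s2`_h - \sum_h tmul (\sum_k c h k *: z k) s2`_h =
  \sum_h tmul (tfun (phi h) x - \sum_k c h k *: z k) s2`_h.
Proof. by rewrite -sumrB; apply: eq_bigr => h _; rewrite tmulDl tmulNl. Qed.

Hypothesis HM : forall j, cohom_fg (@md_d _ L Mo) (fun n (c : K) (x : M n) => c *: x) j.

Lemma Fgr j : exists zs : seq (Xf j), forall x, Fp p j x -> Fp p.+1 j.+1 (D x) ->
  exists t y f, Lin zs t /\ Bd (X := fun n => tens A (M n)) (fun n => @twisted_d K A L Mo omega n) Fp p y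
     /\ Fp p.+1 j f /\ x = t + y + f.
Proof.
case: j => [|j].
  have [rM [z [_ Hz]]] := HM 0.
  exists (zsf z) => x hx hD.
  have [c [hc Fx]] := Fgr_common hx hD Hz.
  set t := \sum_h tmul (\sum_k c h k *: z k) s2`_h.
  have et : t = \sum_h tmul (tfun (phi h) x) s2`_h.
    by apply: eq_bigr => h _; have := hc h; rewrite /= => /subr0_eq ->.
  exists t, 0, (x - t); split; first exact: Lin_t.
  split=> //; split; first by rewrite et.
  by rewrite addr0 addrC subrK.
have [rM [z [_ Hz]]] := HM j.+1.
exists (zsf z) => x hx hD.
have [c [hc Fx]] := Fgr_common hx hD Hz.
have [y hy] := fin_all_exists hc.
set t := \sum_h tmul (\sum_k c h k *: z k) s2`_h.
pose Y := \sum_h tmul (y h) s2`_h.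
have FY : Fp p j Y by apply: F_sum => h _; apply: F_tmul; apply: s2U.
exists t, (D Y), (x - t - D Y); split; first exact: Lin_t.
split; first by exists Y.
split; last exact: alg4.
have E : tlin (@md_d _ L Mo j) Y = \sum_h tmul (tfun (phi h) x) s2`_h - t.
  rewrite key tlin_sum; apply: eq_bigr => h _; by rewrite tlin_tmul -hy.
rewrite -(alg3 x (\sum_h tmul (tfun (phi h) x) s2`_h) t (D Y)) -E.
by apply: subspB (Fs _ _) _ _ => //; apply: Fomega.
Qed.
End Gr.

Lemma FP_ P : (forall x, x \in Iv a P -> x = 0) -> forall n (x : Xf n), Fp P n x -> x = 0.
Proof.
move=> H n x [s [hs ->]]; rewrite big_seq big1 // => vb vbs.
by rewrite (H _ (allP hs vb vbs)) tmul0r.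
Qed.

Lemma Fp0 n (x : Xf n) : Fp 0 n x.
Proof.
exists [seq (x i, tnth (eA A) i) | i <- index_enum 'I_(dimA A)]; split.
  by apply/allP => vb /mapP [i _ ->]; apply: F5.
by rewrite big_map -tdec.
Qed.
End Main.

Lemma AllP_nth (K : fieldType) (V : lmodType K) (P : V -> Prop) zs x0 :
  AllP P zs -> P x0 -> forall i, P (nth x0 zs i).
Proof. by elim: zs => [_ H i|z zs IH [Pz Pzs] H [|i]] //=; [case: i | apply: IH]. Qed.

Lemma Lin_coef (K : fieldType) (V : lmodType K) (zs : seq V) t :
  Lin zs t -> exists c : 'I_(size zs) -> K, t = \sum_(k < size zs) c k *: zs`_k.
Proof.
elim: zs t => [t /= ->|z zs IH t [c0 /IH [c' ec']]]; first by exists (fun _ => 0); rewrite big_ord0.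
exists (fun k : 'I_(size zs).+1 => if unlift ord0 k is Some i then c' i else c0).
rewrite big_ord_recl /= unlift_none -[t](subrK (c0 *: z)) ec' addrC; congr (_ + _).
by apply: eq_bigr => i _; rewrite liftK.
Qed.

Lemma Bd_cob (K : fieldType) (X : nat -> lmodType K) (D : forall n, X n -> X n.+1) F j (y : X j) :
  Bd D F 0 y -> is_cobound D y.
Proof. by case: j y => [|j] y //= [w [_ <-]]; exists w. Qed.


Unset Implicit Arguments.

Theorem lemma3p10 (R : realType) (L : dgla R[i]) (Mo : dgmod L)
  (A : falgType R[i]) (m : pred A) (omega : tens A (dg_C L 1)) :
  (exists N : nat, forall j, (N < j)%N -> forall x : md_M Mo j, x = 0) ->
  (forall j, cohom_fg (@md_d _ L Mo) (fun n (c : R[i]) (x : md_M Mo n) => c *: x) j) ->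
  (forall a b : A, a * b = b * a) ->
  local_with_max m ->
  in_tens_sub m omega ->
  tlin (@dg_d _ L 1) omega
    + (2%:R)^-1 *: tbil (@dg_br _ L 1 1) omega omega = 0 ->
  forall j, cohom_fg (@twisted_d _ A L Mo omega)
              (fun n (a : A) (x : tens A (md_M Mo n)) => tact a x) j.
Proof.
move=> _ HM AC Hloc [r [w [a [am om]]]] MC j.
have two : (2%:R : R[i]) != 0 by rewrite pnatr_eq0.
have [P HP] := F6 AC Hloc am.
have G := @G0 R[i] (fun n => tens A (md_M Mo n)) (fun n => @twisted_d _ A L Mo omega n)
   (fun n x => DDx AC two MC x)
   (fun n c x y => etrans (tDD omega _ _) (congr1 (fun z => z + _) (tDZ omega c x)))
   (fun p n x => @Fp _ L Mo A r a p n x) (Fs Mo a) (fun p n x => @Fdec _ L Mo A AC r a p n x)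
   P (FP_ HP) (fun p j _ => Fgr om p HM j) j.
have [xs [Axs Hxs]] := G.
exists (size xs), (fun k => xs`_k); split.
  move=> k; have := AllP_nth Axs (x0 := 0) _ k.
  by case=> [|_ ->] //; split; [exact: subsp0 (Fs Mo a 0 j) | exact: tD0].
move=> x Dx; have [t [y [Lt [By ext]]]] := Hxs x (Fp0 a x) Dx.
have [c ec] := Lin_coef Lt.
exists (fun k => (c k)%:A).
have -> : x - \sum_(k < size xs) tact (c k)%:A xs`_k = y.
  under eq_bigr => k _ do rewrite tact_scal.
  by rewrite -ec ext addrC addKr.
exact: Bd_cob By.
Qed.
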